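(* For every finite hypergraph $\mathcal{H}=(X,\mathcal{E})$ with no isolated vertices and no empty hyperedge, $\tau_{\rm gr}(\mathcal{H})=\rho_{\rm gr}(\mathcal{H})$.
   Context: A vertex of a hypergraph is isolated if it lies in no hyperedge. A sequence $(C_1,\ldots,C_r)$ of distinct hyperedges is a legal hyperedge sequence if $C_i\setminus\bigcup_{j<i}C_j\neq\emptyset$ for all $i\in\{2,\ldots,r\}$; it is an edge covering sequence if moreover $C_1\cup\cdots\cup C_r=X$. The Grundy covering number $\rho_{\rm gr}(\mathcal{H})$ is the maximum length of an edge covering sequence. A legal transversal sequence is a sequence $(v_1,\ldots,v_t)$ of distinct vertices of $X$ such that for each $i$ there is a hyperedge $E_i\in\mathcal{E}$ with $v_i\in E_i$ and $v_j\notin E_i$ for all $j<i$, and such that every hyperedge of $\mathcal{E}$ contains some $v_i$. The Grundy transversal number $\tau_{\rm gr}(\mathcal{H})$ is the maximum length of a legal transversal sequence. *)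

(* Defs.v *)
From mathcomp Require Import all_boot.
Set Implicit Arguments. Unset Strict Implicit. Unset Printing Implicit Defensive.

Section Hypergraph.
Variable X : finType.
Variable E : {set {set X}}.

Definition no_isolated : Prop := forall x : X, exists2 e, e \in E & x \in e.

Definition no_empty_edge : Prop := set0 \notin E.

(* (C_1,...,C_r) distinct hyperedges with C_i \ (C_1 u ... u C_{i-1}) <> empty
   for every i >= 2 (0-based index i >= 1 below). *)
Definition legal_edge_seq (s : seq {set X}) : bool :=
  [&& uniq s, all (fun C => C \in E) s &
      [forall i : 'I_(size s), (0 < i) ==>
         ~~ (tnth (in_tuple s) i \subset \bigcup_(C <- take i s) C)]].

Definition edge_covering_seq (s : seq {set X}) : bool :=
  legal_edge_seq s && (\bigcup_(C <- s) C == [set: X]).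

(* Grundy covering number: maximum length of an edge covering sequence
   (lengths are bounded by #|E| since the hyperedges are distinct). *)
Definition rho_gr : nat :=
  \max_(k < #|E|.+1 | [exists t : k.-tuple {set X}, edge_covering_seq t]) k.

Definition legal_transversal_seq (s : seq X) : bool :=
  [&& uniq s,
      [forall i : 'I_(size s), [exists e in E,
         (tnth (in_tuple s) i \in e) &&
         [forall j : 'I_(size s), (j < i) ==> (tnth (in_tuple s) j \notin e)]]] &
      [forall e in E, has (fun v => v \in e) s]].

(* Grundy transversal number (lengths bounded by #|X|, vertices distinct). *)
Definition tau_gr : nat :=
  \max_(k < #|X|.+1 | [exists t : k.-tuple X, legal_transversal_seq t]) k.

End Hypergraph.

(* Main.v *)
Require Import Defs.
From mathcomp Require Import all_boot.
From mathcomp Require Import zify.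
Set Implicit Arguments. Unset Strict Implicit. Unset Printing Implicit Defensive.

Lemma mem_bigcup_seq (X : finType) (s : seq {set X}) v :
  (v \in \bigcup_(D <- s) D) = has (fun D : {set X} => v \in D) s.
Proof.
by elim: s => [|D s IH]; rewrite ?big_nil ?big_cons ?in_set0 // in_setU IH.
Qed.

Lemma LEP (X : finType) (E : {set {set X}}) c : legal_edge_seq E c <->
  [/\ uniq c, {subset c <= E} & forall i, 0 < i -> i < size c ->
     ~~ (nth set0 c i \subset \bigcup_(D <- take i c) D)].
Proof.
rewrite /legal_edge_seq; split.
- case/and3P => u /allP a /forallP f; split => // i i0 ilt.
  by have := f (Ordinal ilt); rewrite /= i0 /= (tnth_nth set0).
- case=> u a f; apply/and3P; split => //; first by apply/allP.
  apply/forallP => i; apply/implyP => i0; rewrite (tnth_nth set0) /=; exact: f.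
Qed.

Definition LTp (X : finType) (E : {set {set X}}) (x0 : X) (s : seq X) :=
  uniq s /\ forall i, i < size s -> exists2 e, e \in E &
     (nth x0 s i \in e) /\ (forall j, j < i -> nth x0 s j \notin e).

Lemma LTP (X : finType) (E : {set {set X}}) x0 s : legal_transversal_seq E s <->
  LTp E x0 s /\ forall e, e \in E -> has (fun v => v \in e) s.
Proof.
rewrite /legal_transversal_seq; split.
- case/and3P => u /forallP f /forallP h; split; first split => //.
  + move=> i ilt; have /existsP [e /andP [eE /andP [ve /forallP g]]] := f (Ordinal ilt).
    exists e => //; split; first by rewrite (tnth_nth x0) in ve.
    move=> j ji; have jlt : j < size s by apply: ltn_trans ji ilt.
    by have := g (Ordinal jlt); rewrite /= ji /= (tnth_nth x0).
  + by move=> e eE; move/implyP: (h e); apply.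
- case=> [[u f] h]; apply/and3P; split => //.
  + apply/forallP => i; have [e eE [ve g]] := f i (ltn_ord i).
    apply/existsP; exists e; rewrite eE (tnth_nth x0) ve /=.
    apply/forallP => j; apply/implyP => ji; rewrite (tnth_nth x0); exact: g.
  + apply/forallP => e; apply/implyP => eE; exact: h.
Qed.

Definition Pstr (X : finType) (E : {set {set X}}) n (x : nat -> X) (C : nat -> {set X}) :=
  forall i, i < n -> [/\ x i \in C i, C i \in E & forall j, j < i -> x i \notin C j].

Lemma PA (X : finType) (E : {set {set X}}) n x C : Pstr E n x C -> legal_edge_seq E (mkseq C n).
Proof.
move=> H; apply/LEP; rewrite size_mkseq; split.
- rewrite /mkseq map_inj_in_uniq ?iota_uniq // => i j; rewrite !mem_iota /= !add0n => ilt jlt eq.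
  case: (ltngtP i j) => // ij.
  + by have [xj _ hj] := H j jlt; move: (hj i ij); rewrite eq xj.
  + by have [xi _ hi] := H i ilt; move: (hi j ij); rewrite -eq xi.
- move=> D /mapP [i]; rewrite mem_iota add0n => /andP [_ ilt] ->; by case: (H i ilt).
- move=> i i0 ilt; rewrite nth_mkseq // /mkseq -map_take take_iota.
  have [xi _ hi] := H i ilt.
  apply/subsetPn; exists (x i) => //; rewrite mem_bigcup_seq; apply/hasPn => D /mapP [j].
  rewrite mem_iota add0n => /andP [_ jlt] ->; apply: hi; lia.
Qed.

Lemma PB (X : finType) (E : {set {set X}}) n x C x0 : Pstr E n x C ->
  LTp E x0 (mkseq (fun i => x (n.-1 - i)) n).
Proof.
move=> H.
have key : forall a b, a < n -> b < n -> x a = x b -> a = b.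
  move=> a b an bn eq; case: (ltngtP a b) => // ab.
  + by have [_ _ hb] := H b bn; have [xa _ _] := H a an; move: (hb a ab); rewrite -eq xa.
  + by have [_ _ ha] := H a an; have [xb _ _] := H b bn; move: (ha b ab); rewrite eq xb.
rewrite /LTp size_mkseq; split.
- rewrite /mkseq map_inj_in_uniq ?iota_uniq // => i j; rewrite !mem_iota /= !add0n => ilt jlt eq.
  have := key _ _ _ _ eq; lia.
- move=> i ilt; have an : n.-1 - i < n by lia.
  have [xa Ca ha] := H _ an; exists (C (n.-1 - i)) => //; split; first by rewrite nth_mkseq.
  move=> j ji; rewrite nth_mkseq; last lia.
  have bn : n.-1 - j < n by lia.
  have [_ _ hb] := H _ bn; apply: hb; lia.
Qed.

Lemma PC (X : finType) (E : {set {set X}}) c x0 : no_empty_edge E -> legal_edge_seq E c ->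
  Pstr E (size c) (fun i => odflt x0 [pick v in nth set0 c i :\: \bigcup_(D <- take i c) D])
    (nth set0 c).
Proof.
move=> ne /LEP [u sub f] i ilt.
have Ci : nth set0 c i \in E by apply: sub; exact: mem_nth.
have ex : exists v, v \in nth set0 c i :\: \bigcup_(D <- take i c) D.
  case: (posnP i) => [i0 | i0].
  - rewrite i0 take0 big_nil setD0; apply/set0Pn; apply/eqP => e0.
    by move: ne; rewrite /no_empty_edge -e0 -i0 Ci.
  - by have /subsetPn [v v1 v2] := f i i0 ilt; exists v; rewrite inE v1 v2.
case: pickP => [v | none]; last by case: ex => v; rewrite none.
rewrite /= inE => /andP [vU vC]; split => // j ji.
apply: contra vU => vj; rewrite mem_bigcup_seq; apply/hasP; exists (nth set0 c j) => //.
rewrite -(nth_take set0 ji); apply: mem_nth; rewrite size_takel //; exact: ltnW.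
Qed.

Lemma fchoice (T : Type) (d : T) (P : nat -> T -> Prop) n :
  (forall i, i < n -> exists y, P i y) -> exists f : nat -> T, forall i, i < n -> P i (f i).
Proof.
elim: n => [|n IH] H; first by exists (fun _ => d).
have [f Hf] := IH (fun i ilt => H i (leqW ilt)).
have [y Hy] := H n (ltnSn n).
exists (fun i => if i == n then y else f i) => i ilt; case: eqP => [-> // | ne].
apply: Hf; lia.
Qed.

Lemma PD (X : finType) (E : {set {set X}}) x0 s : LTp E x0 s ->
  exists C, Pstr E (size s) (fun i => nth x0 s ((size s).-1 - i)) C.
Proof.
case=> _ w.
have w' : forall i, i < size s -> exists e, e \in E /\ ((nth x0 s i \in e) /\ (forall j, j < i -> nth x0 s j \notin e)).
  by move=> i ilt; have [e ? ?] := w i ilt; exists e.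
have [W HW] := fchoice set0 w'.
exists (fun i => W ((size s).-1 - i)) => i ilt.
have an : (size s).-1 - i < size s by lia.
have [WE [xa _]] := HW _ an; split => // j ji.
have bn : (size s).-1 - j < size s by lia.
have [_ [_ hb]] := HW _ bn; apply: hb; lia.
Qed.

Lemma legal_size (X : finType) (E : {set {set X}}) c : legal_edge_seq E c -> size c <= #|E|.
Proof.
move/LEP => [u sub _]; rewrite -(card_uniqP u); apply: subset_leq_card; apply/subsetP.
exact: sub.
Qed.

Lemma legal_rcons (X : finType) (E : {set {set X}}) c e : legal_edge_seq E c -> e \in E ->
  ~~ (e \subset \bigcup_(D <- c) D) -> legal_edge_seq E (rcons c e).
Proof.
move=> /LEP [u sub f] eE ns; apply/LEP; split.
- rewrite rcons_uniq u andbT; apply: contra ns => ec.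
  apply/subsetP => w we; rewrite mem_bigcup_seq; apply/hasP; by exists e.
- move=> D; rewrite mem_rcons inE => /orP [/eqP -> // | /sub //].
- move=> i i0; rewrite size_rcons ltnS leq_eqVlt => /orP [/eqP -> | ilt].
  + by rewrite nth_rcons ltnn eqxx -cats1 take_size_cat.
  + rewrite nth_rcons ilt -cats1 takel_cat ?(ltnW ilt) //; exact: f.
Qed.

Lemma ext1 (X : finType) (E : {set {set X}}) m c : no_isolated E ->
  #|E| - size c <= m -> legal_edge_seq E c ->
  exists c', edge_covering_seq E c' && (size c <= size c').
Proof.
move=> ni; elim: m c => [|m IH] c hm lc;
  (case cov: (\bigcup_(C <- c) C == [set: X]);
    first by exists c; rewrite /edge_covering_seq lc cov leqnn);
  (rewrite eqEsubset subsetT /= in cov;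
   have /subsetPn [v _ vU] : ~~ ([set: X] \subset \bigcup_(C <- c) C) by rewrite cov);
  (have [e eE ve] := ni v);
  (have lc' : legal_edge_seq E (rcons c e) by
     apply: legal_rcons => //; apply/subsetPn; exists v).
- have := legal_size lc'; rewrite size_rcons; lia.
- have [c' /andP [h1 h2]] := IH (rcons c e) ltac:(rewrite size_rcons; lia) lc'.
  exists c'; rewrite h1 /=; apply: leq_trans h2; rewrite size_rcons; exact: leqnSn.
Qed.

Lemma LTp_size (X : finType) (E : {set {set X}}) x0 s : LTp E x0 s -> size s <= #|X|.
Proof. by case=> u _; rewrite -(card_uniqP u); apply: max_card. Qed.

Lemma LTp_rcons (X : finType) (E : {set {set X}}) x0 s v e : LTp E x0 s -> e \in E -> v \in e ->
  ~~ has (fun u => u \in e) s -> LTp E x0 (rcons s v).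
Proof.
move=> [u w] eE ve nh; split.
- rewrite rcons_uniq u andbT; apply: contra nh => vs; apply/hasP; by exists v.
- move=> i; rewrite size_rcons ltnS leq_eqVlt => /orP [/eqP -> | ilt].
  + exists e => //; rewrite nth_rcons ltnn eqxx; split => // j jlt.
    rewrite nth_rcons jlt; apply: (hasPn nh); exact: mem_nth.
  + have [e' eE' [v' g]] := w i ilt; exists e' => //; rewrite nth_rcons ilt; split => // j ji.
    rewrite nth_rcons (ltn_trans ji ilt); exact: g.
Qed.

Lemma ext2 (X : finType) (E : {set {set X}}) x0 m s : no_empty_edge E ->
  #|X| - size s <= m -> LTp E x0 s ->
  exists s', legal_transversal_seq E s' && (size s <= size s').
Proof.
move=> ne; elim: m s => [|m IH] s hm ls;
  (case cov: [forall e in E, has (fun v => v \in e) s];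
    first by (exists s; rewrite leqnn andbT; apply/(LTP E x0); split => // e eE;
              move/forallP: cov => /(_ e); rewrite eE));
  (have /existsP [e /andP [eE nh]] : [exists e in E, ~~ has (fun v => v \in e) s]
     by rewrite -negb_forall_in cov);
  (have /set0Pn [v ve] : e != set0 by apply/eqP => e0; move: ne; rewrite /no_empty_edge -e0 eE);
  (have ls' := LTp_rcons ls eE ve nh).
- have := LTp_size ls'; rewrite size_rcons; lia.
- have [s' /andP [h1 h2]] := IH (rcons s v) ltac:(rewrite size_rcons; lia) ls'.
  exists s'; rewrite h1 /=; apply: leq_trans h2; rewrite size_rcons; exact: leqnSn.
Qed.

Theorem mainTheorem18 (X : finType) (E : {set {set X}}) :
  no_isolated E -> no_empty_edge E -> tau_gr E = rho_gr E.
Proof.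
move=> ni ne; apply/eqP; rewrite eqn_leq; apply/andP; split.
- apply/bigmax_leqP => k /existsP [t Ht] /=.
  rewrite -(size_tuple t); move: Ht; case: (tval t) => [|x0 s] Ht; first by [].
  have [[u w] _] := (LTP E x0 _).1 Ht.
  have [C HC] := PD (conj u w).
  have [c' /andP [cc sz]] := ext1 ni (leqnn _) (PA HC).
  rewrite size_mkseq in sz; apply: leq_trans sz _.
  have hb : size c' < #|E|.+1 by rewrite ltnS; apply: legal_size; case/andP: cc.
  apply: (@leq_trans (Ordinal hb)) => //; apply: leq_bigmax_cond.
  by apply/existsP; exists (in_tuple c').
- apply/bigmax_leqP => k /existsP [t Ht] /=.
  rewrite -(size_tuple t); move: Ht; case: (tval t) => [|C0 c] Ht; first by [].
  have lc : legal_edge_seq E (C0 :: c) by case/andP: Ht.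
  have C0E : C0 \in E by move/LEP: lc => [_ sub _]; apply: sub; rewrite inE eqxx.
  have /set0Pn [x0 _] : C0 != set0 by apply/eqP => e0; move: ne; rewrite /no_empty_edge -e0 C0E.
  have HP := PC x0 ne lc.
  have lt := PB x0 HP.
  have [s' /andP [ss sz]] := ext2 ne (leqnn _) lt.
  rewrite size_mkseq in sz; apply: leq_trans sz _.
  have hb : size s' < #|X|.+1 by rewrite ltnS; have [[u _] _] := (LTP E x0 _).1 ss;
    rewrite -(card_uniqP u); apply: max_card.
  apply: (@leq_trans (Ordinal hb)) => //; apply: leq_bigmax_cond.
  by apply/existsP; exists (in_tuple s').
Qed.
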